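(* Let a quantum system be given, i.e. a finite-dimensional complex Hilbert space $\mathcal{H}$ together with sets $\mathcal{P},\mathcal{M},\mathcal{T}$ of preparations, measurements and transformations, where every density operator on $\mathcal{H}$ represents some preparation and every self-adjoint operator on $\mathcal{H}$ represents some measurement. Then every ontic model for this quantum system that is $\psi$-complete is also $\psi$-ontic.
   Context: A quantum system consists of a finite-dimensional Hilbert space $\mathcal{H}$ and sets $\mathcal{P}$ (preparations), $\mathcal{M}$ (measurements), $\mathcal{T}$ (transformations), together with surjective (possibly many-to-one) maps assigning to each $P\in\mathcal{P}$ a density operator $\rho$ on $\mathcal{H}$, to each $M\in\mathcal{M}$ a self-adjoint operator $A$ on $\mathcal{H}$ (a projection-valued measurement), and to each $T\in\mathcal{T}$ a unitary $U$ on $\mathcal{H}$; we write $P_\rho, M_A, T_U$. For an eigenvalue $a$ of $A$, $[a]_A$ denotes the projection onto the corresponding eigenspace; the quantum probability of outcome $a$ is $\mathrm{Tr}(U\rho U^*[a]_A)$. For a unit vector $\psi$, $[\psi]$ is the projection onto its span; a pure state is $\rho=[\psi]$. An ontic model for the system consists of a measurable space $(\Lambda,\Sigma)$; for each $M\in\mathcal{M}$ a Markov kernel $p_M$ (response function) assigning to each $\lambda\in\Lambda$ a probability distribution $p_M(\cdot|\lambda)$ on the eigenvalues of the operator representing $M$; for each $P\in\mathcal{P}$ a probability measure $\mu_P$ on $(\Lambda,\Sigma)$; for each $T\in\mathcal{T}$ a Markov kernel $\gamma_T$ from $(\Lambda,\Sigma)$ to itself; such that for all $P_\rho,M_A,T_U$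 and eigenvalues $a$: $\int p_{M_A}(a|\lambda)\,d\mu_{P_\rho}(\lambda)=\mathrm{Tr}(\rho[a]_A)$ and $\iint p_{M_A}(a|\lambda)\gamma_{T_U}(d\lambda|\tilde\lambda)\,d\mu_{P_\rho}(\tilde\lambda)=\mathrm{Tr}(U\rho U^*[a]_A)$. The ontic model is trivial with respect to $\mathcal{M}'\subset\mathcal{M}$ and $\mathcal{P}'\subset\mathcal{P}$ if for every $P_\rho\in\mathcal{P}'$, every $M_A\in\mathcal{M}'$ and every eigenvalue $a$ of $A$, $\int|p_{M_A}(a|\lambda)-\mathrm{Tr}(\rho[a]_A)|\,d\mu_{P_\rho}(\lambda)=0$. It is $\psi$-complete if it is trivial with respect to all of $\mathcal{M}$ and $\mathcal{P}$. The ontic model is $\psi$-ontic if for any two preparations $P_1,P_2$ represented by distinct pure quantum states, $\sup_{\Delta\in\Sigma}|\mu_{P_1}(\Delta)-\mu_{P_2}(\Delta)|=1$. *)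

(* Defs.v *)
From HB Require Import structures.
From mathcomp Require Import all_boot all_order all_algebra.
From mathcomp Require Import all_classical all_reals.
From mathcomp Require Import ereal measure lebesgue_measure lebesgue_integral probability kernel.
From mathcomp Require Import complex.

Set Implicit Arguments.
Unset Strict Implicit.
Unset Printing Implicit Defensive.

Import Order.TTheory GRing.Theory Num.Theory.
Local Open Scope ring_scope.
Local Open Scope classical_set_scope.

(* The Hilbert space is C^n (column vectors 'cV_n), with C = R[i]. *)

Definition adj (R : rcfType) (m k : nat) (M : 'M[R[i]]_(m, k)) : 'M[R[i]]_(k, m) :=
  (map_mx (@conjc R) M)^T.

Definition selfadjoint (R : rcfType) (n : nat) (A : 'M[R[i]]_n) : Prop :=
  adj A = A.

Definition unitary (R : rcfType) (n : nat) (U : 'M[R[i]]_n) : Prop :=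
  U *m adj U = 1%:M /\ adj U *m U = 1%:M.

Definition density (R : rcfType) (n : nat) (rho : 'M[R[i]]_n) : Prop :=
  [/\ selfadjoint rho,
      (forall v : 'cV[R[i]]_n, 0 <= (adj v *m rho *m v) 0 0)
    & \tr rho = 1].

Definition pure_state (R : rcfType) (n : nat) (rho : 'M[R[i]]_n) : Prop :=
  exists psi : 'cV[R[i]]_n, adj psi *m psi = 1%:M /\ rho = psi *m adj psi.

Definition is_eigenvalue (R : rcfType) (n : nat) (A : 'M[R[i]]_n) (a : R[i]) : Prop :=
  exists2 v : 'cV[R[i]]_n, v != 0 & A *m v = a *: v.

(* [a]_A : orthogonal projection onto the eigenspace {v | A v = a v}.
   The rows of B := row_base (eigenspace A^T a) are (transposes of) a basis
   of that eigenspace; with C := B^T (columns form a basis), the orthogonal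
   projection onto the column space of C is C (C^* C)^{-1} C^*. *)
Definition eigproj (R : rcfType) (n : nat) (A : 'M[R[i]]_n) (a : R[i]) : 'M[R[i]]_n :=
  let C := (row_base (eigenspace A^T a))^T in
  C *m invmx (adj C *m C) *m adj C.

(* quantum probability Tr(U rho U^* [a]_A) (a real number; we take its real part,
   the imaginary part being zero for density rho and self-adjoint A) *)
Definition qprob (R : rcfType) (n : nat) (U rho A : 'M[R[i]]_n) (a : R[i]) : R :=
  complex.Re (\tr (U *m rho *m adj U *m eigproj A a)).

Local Open Scope ereal_scope.

(* An ontic model for the quantum system with preparations Prep (rho),
   measurements Meas (obs), transformations Trans (uni), on the measurable
   space Lam, with response functions p, preparation measures mu and Markov
   kernels gam. p M l is the distribution p_M(.|l) on the eigenvalues of obs M. *)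
Definition ontic_model (R : realType) (n : nat)
    (Prep Meas Trans : Type)
    (rho : Prep -> 'M[R[i]]_n) (obs : Meas -> 'M[R[i]]_n) (uni : Trans -> 'M[R[i]]_n)
    (d : measure_display) (Lam : measurableType d)
    (p : Meas -> Lam -> R[i] -> R)
    (mu : Prep -> probability Lam R)
    (gam : Trans -> R.-pker Lam ~> Lam) : Prop :=
  (* response functions are Markov kernels to the (finite) set of eigenvalues *)
  (forall M a, measurable_fun setT (fun l => p M l a)) /\
  (forall M l a, (0 <= p M l a)%R) /\
  (forall M l a, ~ is_eigenvalue (obs M) a -> p M l a = 0%R) /\
  (forall M l, (\sum_(a \in [set a | is_eigenvalue (obs M) a]) p M l a)%R = 1%R) /\
  (forall P M a, is_eigenvalue (obs M) a ->
     \int[mu P]_l (p M l a)%:E = (qprob 1%:M (rho P) (obs M) a)%:E) /\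
  (forall P M T a, is_eigenvalue (obs M) a ->
     \int[mu P]_lt (\int[gam T lt]_l (p M l a)%:E)
       = (qprob (uni T) (rho P) (obs M) a)%:E).

Definition trivial_wrt (R : realType) (n : nat) (Prep Meas : Type)
    (rho : Prep -> 'M[R[i]]_n) (obs : Meas -> 'M[R[i]]_n)
    (d : measure_display) (Lam : measurableType d)
    (p : Meas -> Lam -> R[i] -> R) (mu : Prep -> probability Lam R)
    (M' : set Meas) (P' : set Prep) : Prop :=
  forall P M a, P' P -> M' M -> is_eigenvalue (obs M) a ->
    \int[mu P]_l (`|p M l a - qprob 1%:M (rho P) (obs M) a|%R)%:E = 0.

Definition psi_complete (R : realType) (n : nat) (Prep Meas : Type)
    (rho : Prep -> 'M[R[i]]_n) (obs : Meas -> 'M[R[i]]_n)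
    (d : measure_display) (Lam : measurableType d)
    (p : Meas -> Lam -> R[i] -> R) (mu : Prep -> probability Lam R) : Prop :=
  trivial_wrt rho obs p mu setT setT.

Definition psi_ontic (R : realType) (n : nat) (Prep : Type)
    (rho : Prep -> 'M[R[i]]_n)
    (d : measure_display) (Lam : measurableType d)
    (mu : Prep -> probability Lam R) : Prop :=
  forall P1 P2, pure_state (rho P1) -> pure_state (rho P2) -> rho P1 <> rho P2 ->
    ereal_sup [set `|mu P1 D - mu P2 D| | D in [set D | measurable D]] = 1.

(* Main.v *)
Require Import Defs.
From HB Require Import structures.
From mathcomp Require Import all_boot all_order all_algebra.
From mathcomp Require Import all_classical all_reals.
From mathcomp Require Import ereal measure lebesgue_measure lebesgue_integral probability kernel.
From mathcomp Require Import complex.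
From mathcomp Require Import lra measurable_realfun.

Set Implicit Arguments.
Unset Strict Implicit.
Unset Printing Implicit Defensive.
Import Order.TTheory GRing.Theory Num.Theory.

Local Open Scope ring_scope.
Section Alg.
Variable R : rcfType.
Local Notation C := R[i].

Lemma adjE m k (M : 'M[C]_(m,k)) i j : adj M i j = conjc (M j i).
Proof. by rewrite /adj !mxE. Qed.

Lemma adjM m k l (M : 'M[C]_(m,k)) (N : 'M[C]_(k,l)) : adj (M *m N) = adj N *m adj M.
Proof. by rewrite /adj map_mxM trmx_mul. Qed.

Lemma adjK m k (M : 'M[C]_(m,k)) : adj (adj M) = M.
Proof. by apply/matrixP => i j; rewrite !adjE conjcK. Qed.

Lemma adjB m k (M N : 'M[C]_(m,k)) : adj (M - N) = adj M - adj N.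
Proof. by apply/matrixP => i j; rewrite /adj !mxE rmorphB. Qed.

Lemma adj1 k : adj (1%:M : 'M[C]_k) = 1%:M.
Proof. apply/matrixP => i j. by rewrite /adj !mxE conjc_nat eq_sym. Qed.

Lemma adj_scalar a : adj (a%:M : 'M[C]_1) = (conjc a)%:M.
Proof. apply/matrixP => i j. by rewrite /adj !mxE rmorphMn eq_sym. Qed.

Lemma mulJ_ge0 (x : C) : 0 <= conjc x * x.
Proof. by rewrite mulrC mulcJ_ge0. Qed.

Lemma mulJ_eq0 (x : C) : conjc x * x = 0 -> x = 0.
Proof. by move/eqP; rewrite mulf_eq0 conjc_eq0 orbb => /eqP. Qed.

Lemma norm_eq0 m (v : 'cV[C]_m) : adj v *m v = 0 -> v = 0.
Proof.
move=> /matrixP /(_ 0 0); rewrite !mxE => H.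
apply/matrixP => i j; rewrite (ord1 j) mxE.
have H0 : forall k : 'I_m, predT k -> 0 <= adj v 0 k * v k 0.
  by move=> k _; rewrite adjE mulJ_ge0.
have := (@psumr_eq0P _ _ predT (fun k => adj v 0 k * v k 0) H0 H i isT).
by rewrite adjE; apply: mulJ_eq0.
Qed.


Lemma gram_unit k m (B : 'M[C]_(k, m)) : row_free B -> (adj B^T *m B^T) \in unitmx.
Proof.
move=> fB; rewrite -row_free_unit -kermx_eq0; apply/eqP.
set K := kermx _.
have HK : K *m (adj B^T *m B^T) = 0 by exact: mulmx_ker.
apply/row_matrixP => i; rewrite row0.
set y := row i K.
have Hy : y *m (adj B^T *m B^T) = 0 by rewrite /y -row_mul HK row0.
have H1 : adj (B^T *m adj y) *m (B^T *m adj y) = 0.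
  by rewrite adjM adjK !mulmxA -(mulmxA y) Hy mul0mx.
have H2 := norm_eq0 H1.
have : (adj y)^T *m B = 0 by rewrite -[B]trmxK -trmx_mul H2 trmx0.
move/eqP; rewrite mulmx_free_eq0 // => /eqP H3.
by rewrite -[y]adjK -[adj y]trmxK H3 trmx0 /adj map_mx0 trmx0.
Qed.

Lemma eigproj_fix n (A : 'M[C]_n) (x : 'cV[C]_n) : A *m x = x -> eigproj A 1 *m x = x.
Proof.
move=> Ax; rewrite /eigproj.
set B := row_base _.
have : (x^T <= B)%MS.
  rewrite eq_row_base; apply/eigenspaceP.
  by rewrite -trmx_mul Ax scale1r.
case/submxP => D HD.
have -> : x = B^T *m D^T by rewrite -trmx_mul -HD trmxK.
rewrite -!mulmxA (mulmxA (adj B^T)) (mulmxA (invmx _)) mulVmx ?mul1mx //.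
exact: gram_unit (row_base_free _).
Qed.

Lemma eigproj_orth n (A : 'M[C]_n) (w : 'cV[C]_n) : selfadjoint A -> A *m w = 0 -> eigproj A 1 *m w = 0.
Proof.
move=> sA Aw; rewrite /eigproj.
set B := row_base _.
have HB : B *m A^T = B.
  have : (B <= eigenspace A^T 1)%MS by rewrite eq_row_base submx_refl.
  by move/eigenspaceP; rewrite scale1r.
have HC : adj B^T = adj B^T *m A.
  have -> : adj B^T *m A = adj B^T *m adj A by rewrite sA.
  have H1 : (B *m A^T)^T = B^T by rewrite HB.
  by rewrite trmx_mul trmxK in H1; rewrite -adjM H1.
by rewrite -!mulmxA {2}HC -!mulmxA Aw !mulmx0.
Qed.


Lemma ReJ1 (z : C) : complex.Re (conjc z * z) = 1 -> conjc z * z = 1.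
Proof.
case: z => x y /= H.
apply/eqP; rewrite eq_complex /=; apply/andP; split; apply/eqP; first by [].
by rewrite mulNr (mulrC y) subrr.
Qed.

Lemma qprob_pure n (psi : 'cV[C]_n) (A : 'M[C]_n) a :
  qprob 1%:M (psi *m adj psi) A a = complex.Re ((adj psi *m (eigproj A a *m psi)) 0 0).
Proof.
rewrite /qprob adj1 mul1mx mulmx1 -mulmxA mxtrace_mulC.
by rewrite /mxtrace big_ord1 mulmxA.
Qed.

Lemma key n (psi1 psi2 : 'cV[C]_n) : adj psi1 *m psi1 = 1%:M -> adj psi2 *m psi2 = 1%:M ->
  psi1 *m adj psi1 <> psi2 *m adj psi2 ->
  [/\ selfadjoint (psi1 *m adj psi1), is_eigenvalue (psi1 *m adj psi1) 1,
      qprob 1%:M (psi1 *m adj psi1) (psi1 *m adj psi1) 1 = 1 &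
      qprob 1%:M (psi2 *m adj psi2) (psi1 *m adj psi1) 1 != 1].
Proof.
move=> n1 n2 neq.
set A := psi1 *m adj psi1.
have sA : selfadjoint A by rewrite /selfadjoint /A adjM adjK.
have Ap1 : A *m psi1 = psi1 by rewrite /A -mulmxA n1 mulmx1.
have p1n0 : psi1 != 0.
  apply/eqP => p0; move: n1; rewrite p0 mulmx0 => /matrixP /(_ 0 0).
  by rewrite !mxE /= => /eqP; rewrite eq_sym oner_eq0.
split => //.
- by exists psi1 => //; rewrite scale1r.
- by rewrite qprob_pure eigproj_fix // n1 mxE.
set al := adj psi1 *m psi2.
set w := psi2 - psi1 *m al.
have p1w : adj psi1 *m w = 0 by rewrite /w mulmxBr mulmxA n1 mul1mx subrr.
have Aw : A *m w = 0 by rewrite /A -mulmxA p1w mulmx0.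
have Pp2 : eigproj A 1 *m psi2 = psi1 *m al.
  have -> : psi2 = psi1 *m al + w by rewrite /w addrC subrK.
  by rewrite mulmxDr (eigproj_orth sA Aw) addr0 mulmxA eigproj_fix.
rewrite qprob_pure Pp2 mulmxA.
have -> : adj psi2 *m psi1 = adj al by rewrite /al adjM adjK.
set a := al 0 0.
have ala : al = a%:M by exact: mx11_scalar.
rewrite ala adj_scalar mul_scalar_mx !mxE /= mulr1n.
apply/negP => /eqP /ReJ1 Ha.
have adjal : adj al *m al = 1%:M by rewrite ala adj_scalar -scalar_mxM Ha.
have ww : adj w *m w = 0.
  rewrite {1}/w adjB adjM mulmxBl -mulmxA p1w mulmx0 subr0.
  rewrite /w mulmxBr n2 mulmxA.
  have -> : adj psi2 *m psi1 = adj al by rewrite /al adjM adjK.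
  by rewrite adjal subrr.
have w0 := norm_eq0 ww.
have p2 : psi2 = psi1 *m al by apply/eqP; rewrite -subr_eq0 -/w w0.
apply: neq; rewrite p2 adjM mulmxA -(mulmxA psi1) ala adj_scalar -scalar_mxM.
by rewrite mulrC Ha mulmx1.
Qed.

End Alg.

Local Open Scope classical_set_scope.

Lemma null_set (R : realType) (d : measure_display) (T : measurableType d)
  (mu : probability T R) (f : T -> R) (q : R) :
  measurable_fun setT f -> (\int[mu]_l (`|f l - q|)%:E = 0)%E ->
  forall S, measurable S -> (forall l, S l -> f l <> q) -> mu S = 0%E.
Proof.
move=> mf Hi S mS HS.
have mg : measurable_fun setT (fun l => ((f l - q)%R)%:E).
  apply/(measurable_EFinP _ (fun l => (f l - q)%R)); apply: measurable_funB => //; exact: measurable_cst.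
have := (ae_eq_integral_abs mu measurableT mg).1.
have -> : (fun l => `|((f l - q)%R)%:E|%E) = (fun l => (`|f l - q|)%:E).
  by apply: funext => l /=.
move=> /(_ Hi) [N [mN N0 sub]].
apply/eqP; rewrite eq_le measure_ge0 andbT -N0 le_measure ?inE //.
move=> l Sl; apply: sub => /= /(_ I) /eqP; rewrite eqe subr_eq0 => /eqP.
exact: HS.
Qed.

Lemma abs_diff_le1 (R : realType) (x y : \bar R) :
  (0 <= x <= 1)%E -> (0 <= y <= 1)%E -> (`|x - y| <= 1)%E.
Proof.
case: x => [r| |] //; case: y => [s| |] //=; rewrite ?andbF //.
rewrite !lee_fin => /andP[r0 r1] /andP[s0 s1].
rewrite ler_norml; apply/andP; split; lra.
Qed.

Theorem proposition1 (R : realType) (n : nat)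
    (Prep Meas Trans : Type)
    (rho : Prep -> 'M[R[i]]_n) (obs : Meas -> 'M[R[i]]_n) (uni : Trans -> 'M[R[i]]_n)
    (rho_density : forall P, density (rho P))
    (rho_onto : forall r : 'M[R[i]]_n, density r -> exists P, rho P = r)
    (obs_sa : forall M, selfadjoint (obs M))
    (obs_onto : forall A : 'M[R[i]]_n, selfadjoint A -> exists M, obs M = A)
    (uni_unitary : forall T, unitary (uni T))
    (uni_onto : forall U : 'M[R[i]]_n, unitary U -> exists T, uni T = U)
    (d : measure_display) (Lam : measurableType d)
    (p : Meas -> Lam -> R[i] -> R)
    (mu : Prep -> probability Lam R)
    (gam : Trans -> R.-pker Lam ~> Lam) :
  ontic_model rho obs uni p mu gam ->
  psi_complete rho obs p mu ->
  psi_ontic rho mu.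
Proof.
move=> Hom Hpc P1 P2 [psi1 [n1 e1]] [psi2 [n2 e2]] neq.
have neq' : psi1 *m adj psi1 <> psi2 *m adj psi2 by rewrite -e1 -e2.
have [sA eig q1 q2] := key n1 n2 neq'.
have [M hM] := obs_onto _ sA.
case: Hom => mp [_ [_ [_ _]]].
have eigM : is_eigenvalue (obs M) 1 by rewrite hM.
have H1 := Hpc P1 M 1 I I eigM.
have H2 := Hpc P2 M 1 I I eigM.
rewrite hM e1 q1 in H1.
rewrite hM e2 in H2.
set f := fun l => p M l 1.
have mf : measurable_fun setT f := mp M 1.
set D := [set l | f l = 1%R].
have mD : measurable D.
  have := mf measurableT [set 1%R] (measurable_set1 _).
  by rewrite setTI.
have muD1 : mu P1 D = 1%E.
  have := null_set mf H1 (measurableC mD) (fun l nDl => nDl).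
  rewrite probability_setC //; move: (measure_ge0 (mu P1) D) (probability_le1 (mu P1) mD).
  by case: (mu P1 D) => [r| |] //= _ _ /eqP; rewrite -EFinB eqe subr_eq0 => /eqP <-.
have muD2 : mu P2 D = 0%E.
  apply: (null_set mf H2 mD) => l Dl Hq.
  by move/eqP: q2; apply; rewrite -Hq.
apply/eqP; rewrite eq_le; apply/andP; split.
  apply: ge_ereal_sup => _ [E mE <-].
  apply: abs_diff_le1; rewrite measure_ge0 probability_le1 //.
apply: ereal_sup_ubound; exists D => //.
by rewrite muD1 muD2 sube0 abse1.
Qed.
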